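(* Let $(\mathcal{S},\mathcal{R})$ be a homogeneous positive presentation, and let $\kappa$ be the cardinality of $\mathcal{S}$. Then every $r$-completing sequence starting from $(\mathcal{S},\mathcal{R})$ has length less than $\sup(\kappa^+,\aleph_1)$; every presentation occurring in such a sequence defines the same congruence on $\mathcal{S}^*$ (hence the same monoid and group) as $(\mathcal{S},\mathcal{R})$; and every $r$-completing sequence starting from $(\mathcal{S},\mathcal{R})$ that cannot be extended to a longer $r$-completing sequence ends with an $r$-complete presentation equivalent to $(\mathcal{S},\mathcal{R})$.
   Context: A positive presentation is a pair $(\mathcal{S},\mathcal{R})$ where $\mathcal{S}$ is a nonempty set of letters and $\mathcal{R}$ is a family of relations $u=v$, i.e. unordered pairs $\{u,v\}$ of nonempty words in the free monoid $\mathcal{S}^*$. $\varepsilon$ denotes the empty word; $\equiv^{\mathcal{R}}$ is the smallest congruence on $\mathcal{S}^*$ containing all pairs of $\mathcal{R}$. Let $\mathcal{S}^{-1}=\{s^{-1}:s\in\mathcal{S}\}$ be a disjoint copy of $\mathcal{S}$; for $u\in\mathcal{S}^*$, $u^{-1}$ is obtained by reversing the order of the letters of $u$ and replacing each $s$ by $s^{-1}$. Right reversing relative to $\mathcal{R}$: for words $\mathbf{w},\mathbf{w}'$ on $\mathcal{S}\cup\mathcal{S}^{-1}$ we write $\mathbf{w}\curvearrowright_r^{\mathcal{R}}\mathbf{w}'$ if $\mathbf{w}'$ is obtained from $\mathbf{w}$ by a finite (possibly empty) sequence of steps, each of which either deletes a subword $u^{-1}u$ with $u\in\mathcal{S}^*$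 nonempty, or replaces a subword $u^{-1}v$ with $u,v\in\mathcal{S}^*$ nonempty by a word $v'u'^{-1}$ with $u',v'\in\mathcal{S}^*$ such that $uv'=vu'$ is a relation of $\mathcal{R}$. $(\mathcal{S},\mathcal{R})$ is $r$-complete if for all $u,v,u',v'\in\mathcal{S}^*$ with $uv'\equiv^{\mathcal{R}} vu'$ there exist $u'',v'',w\in\mathcal{S}^*$ with $u^{-1}v\curvearrowright_r^{\mathcal{R}} v''u''^{-1}$, $u'\equiv^{\mathcal{R}} u''w$ and $v'\equiv^{\mathcal{R}} v''w$. $(\mathcal{S},\mathcal{R})$ is homogeneous if there exist maps $\lambda,\mu$ from $\mathcal{S}^*$ to the ordinals, both constant on $\equiv^{\mathcal{R}}$-classes, with $\lambda(su)>\lambda(u)$ and $\mu(us)>\mu(u)$ for all $s\in\mathcal{S}$, $u\in\mathcal{S}^*$. A presentation $(\mathcal{S},\mathcal{R}')$ is a $1$-completion of $(\mathcal{S},\mathcal{R})$ if there exist letters $s,t,r\in\mathcal{S}$ and words $u,v\in\mathcal{S}^*$ with $\mathcal{R}'=\mathcal{R}\cup\{sv=tu\}$, $s^{-1}rr^{-1}t\curvearrowright_r^{\mathcal{R}}vu^{-1}$, but not $v^{-1}s^{-1}tu\curvearrowright_r^{\mathcal{R}}\varepsilon$. An $r$-completing sequence starting from $(\mathcal{S},\mathcal{R})$ is a sequence $(\mathcal{S},\mathcal{R}_\xi)_{\xi<\theta}$ indexed by an ordinal $\theta$ with $\mathcal{R}_0=\mathcal{R}$, such that $(\mathcal{S},\mathcal{R}_{\xi+1})$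 is a $1$-completion of $(\mathcal{S},\mathcal{R}_\xi)$ whenever $\xi+1<\theta$, and $\mathcal{R}_\xi=\bigcup_{\eta<\xi}\mathcal{R}_\eta$ for limit $\xi<\theta$. *)

(* Defs.v *)
From Stdlib Require Import List Relations.
Import ListNotations.
Set Implicit Arguments.

Section Presentations.
Variable S : Type.

Definition word := list S.
(* signed letters: inl s = s, inr s = s^{-1} *)
Definition sword := list (S + S).
Definition pos (u : word) : sword := map (@inl S S) u.
Definition inv (u : word) : sword := rev (map (@inr S S) u).

(* A family of relations: R u v means the relation u = v is in the family.
   Relations are unordered pairs, so "u = v is a relation of R" is [urel R u v]. *)
Definition rels := word -> word -> Prop.
Definition urel (R : rels) (u v : word) : Prop := R u v \/ R v u.
Definition same_rels (R R' : rels) : Prop := forall u v, urel R u v <-> urel R' u v.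

Definition positive (R : rels) : Prop := forall u v, R u v -> u <> [] /\ v <> [].

Definition is_congruence (E : word -> word -> Prop) : Prop :=
  equivalence word E /\
  (forall a b u v, E u v -> E (a ++ u ++ b) (a ++ v ++ b)).
Definition cong (R : rels) (x y : word) : Prop :=
  forall E, is_congruence E -> (forall u v, R u v -> E u v) -> E x y.

Inductive rev_step (R : rels) : sword -> sword -> Prop :=
| rs_del : forall a b u, u <> [] ->
    rev_step R (a ++ inv u ++ pos u ++ b) (a ++ b)
| rs_rel : forall a b u v u' v', u <> [] -> v <> [] ->
    urel R (u ++ v') (v ++ u') ->
    rev_step R (a ++ inv u ++ pos v ++ b) (a ++ pos v' ++ inv u' ++ b).
Definition reverses (R : rels) : sword -> sword -> Prop :=
  clos_refl_trans sword (rev_step R).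

Definition r_complete (R : rels) : Prop :=
  forall u v u' v', cong R (u ++ v') (v ++ u') ->
    exists u'' v'' w, reverses R (inv u ++ pos v) (pos v'' ++ inv u'') /\
      cong R u' (u'' ++ w) /\ cong R v' (v'' ++ w).

(* strict well-orders: an ordinal-indexed family is modelled by a type
   carrying a well-order (the type of ordinals below the index ordinal) *)
Definition is_wellorder (W : Type) (lt : W -> W -> Prop) : Prop :=
  well_founded lt /\ (forall x y z, lt x y -> lt y z -> lt x z) /\
  (forall x y, lt x y \/ x = y \/ lt y x).

Definition homogeneous (R : rels) : Prop :=
  exists (W : Type) (lt : W -> W -> Prop) (lam mu : word -> W),
    is_wellorder lt /\
    (forall u v, cong R u v -> lam u = lam v) /\
    (forall u v, cong R u v -> mu u = mu v) /\
    (forall s u, lt (lam u) (lam (s :: u))) /\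
    (forall s u, lt (mu u) (mu (u ++ [s]))).

Definition one_completion (R R' : rels) : Prop :=
  exists (s t r : S) (u v : word),
    same_rels R' (fun x y => R x y \/ (x = s :: v /\ y = t :: u)) /\
    reverses R (inv [s] ++ pos [r] ++ inv [r] ++ pos [t]) (pos v ++ inv u) /\
    ~ reverses R (inv v ++ inv [s] ++ pos [t] ++ pos u) [].

Definition is_succ (I : Type) (lt : I -> I -> Prop) (i j : I) : Prop :=
  lt i j /\ forall k, ~ (lt i k /\ lt k j).
Definition is_limit (I : Type) (lt : I -> I -> Prop) (i : I) : Prop :=
  (exists j, lt j i) /\ ~ (exists j, is_succ lt j i).

Definition r_completing_seq (R : rels) (I : Type) (lt : I -> I -> Prop)
  (Rs : I -> rels) : Prop :=
  is_wellorder lt /\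
  (forall i, (forall j, ~ lt j i) -> same_rels (Rs i) R) /\
  (forall i j, is_succ lt i j -> one_completion (Rs i) (Rs j)) /\
  (forall i, is_limit lt i ->
     forall x y, urel (Rs i) x y <-> exists j, lt j i /\ urel (Rs j) x y).

(* the sequence can be extended to a longer r-completing sequence: it is
   (isomorphic to) a proper initial segment of another one *)
Definition extendable (R : rels) (I : Type) (lt : I -> I -> Prop)
  (Rs : I -> rels) : Prop :=
  exists (J : Type) (ltJ : J -> J -> Prop) (Rs' : J -> rels) (f : I -> J),
    r_completing_seq R ltJ Rs' /\
    (forall a b, lt a b <-> ltJ (f a) (f b)) /\
    (forall j a, ltJ j (f a) -> exists b, f b = j) /\
    (exists j, forall a, f a <> j) /\
    (forall a, same_rels (Rs' (f a)) (Rs a)).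

End Presentations.

(* Main.v *)
Require Import Defs.
From Stdlib Require Import List Relations Classical ClassicalEpsilon Cantor Lia PeanoNat Arith Wf_nat.
From mathcomp Require classical_sets.
Import ListNotations.
Set Implicit Arguments.

Section Basics.
Variable S : Type.
Implicit Types R : rels S.
Implicit Types x y u v : word S.

Lemma cong_refl R x : cong R x x.
Proof. intros E [[Hr _ _] _] _. apply Hr. Qed.

Lemma cong_sym R x y : cong R x y -> cong R y x.
Proof. intros H E HE HR. pose proof HE as [[_ _ Hs] _]. apply Hs. apply H; auto. Qed.

Lemma cong_trans R x y z : cong R x y -> cong R y z -> cong R x z.
Proof. intros H1 H2 E HE HR. pose proof HE as [[_ Ht _] _]. apply Ht with y; [apply H1|apply H2]; auto. Qed.

Lemma cong_ctx R a b x y : cong R x y -> cong R (a ++ x ++ b) (a ++ y ++ b).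
Proof. intros H E HE HR. pose proof HE as [_ Hc]. apply Hc. apply H; auto. Qed.

Lemma cong_base R x y : R x y -> cong R x y.
Proof. intros H E HE HR. auto. Qed.

Lemma cong_urel R x y : urel R x y -> cong R x y.
Proof. intros [H|H]; [apply cong_base|apply cong_sym, cong_base]; auto. Qed.

Lemma cong_is_cong R : is_congruence (cong R).
Proof. split. split. intros x; apply cong_refl. intros x y z; apply cong_trans.
  intros x y; apply cong_sym. intros; apply cong_ctx; auto. Qed.

Lemma cong_mono R1 R2 : (forall x y, R1 x y -> cong R2 x y) -> forall x y, cong R1 x y -> cong R2 x y.
Proof. intros H x y Hc. apply Hc. apply cong_is_cong. auto. Qed.

Lemma cong_app R x x' y y' : cong R x x' -> cong R y y' -> cong R (x ++ y) (x' ++ y').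
Proof. intros H1 H2. apply cong_trans with (x' ++ y).
  pose proof (cong_ctx [] y H1) as H. simpl in H. exact H.
  pose proof (cong_ctx x' [] H2) as H. rewrite !app_nil_r in H. exact H. Qed.

Lemma cong_appl R a y y' : cong R y y' -> cong R (a ++ y) (a ++ y').
Proof. intros; apply cong_app; auto using cong_refl. Qed.
Lemma cong_appr R x x' b : cong R x x' -> cong R (x ++ b) (x' ++ b).
Proof. intros; apply cong_app; auto using cong_refl. Qed.

Lemma cong_same R1 R2 : same_rels R1 R2 -> forall x y, cong R1 x y <-> cong R2 x y.
Proof. intros H x y; split; apply cong_mono; intros a b Hab; apply cong_urel; apply H; left; auto. Qed.

Definition step1 R x y := exists a b l r, urel R l r /\ x = a ++ l ++ b /\ y = a ++ r ++ b.

Lemma cong_chain R x y : cong R x y -> clos_refl_trans _ (step1 R) x y.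
Proof.
  intros H. apply H.
  - split. split.
    + intros z; apply rt_refl.
    + intros a b c; apply rt_trans.
    + intros a b Hab. induction Hab. apply rt_step. destruct H0 as (a&b&l&r&Hu&->&->).
      exists a, b, r, l. split; auto. destruct Hu; [right|left]; auto.
      apply rt_refl. eapply rt_trans; eauto.
    + intros a b u v Huv. induction Huv. apply rt_step.
      destruct H0 as (a'&b'&l&r&Hu&->&->). exists (a ++ a'), (b' ++ b), l, r.
      split; auto. split; rewrite !app_assoc; auto.
      apply rt_refl. eapply rt_trans; eauto.
  - intros u v Huv. apply rt_step. exists [], [], u, v. split. left; auto.
    simpl; rewrite !app_nil_r; auto.
Qed.

Lemma step1_cong R x y : step1 R x y -> cong R x y.
Proof. intros (a&b&l&r&Hu&->&->). apply cong_ctx, cong_urel; auto. Qed.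

Lemma chain_cong R x y : clos_refl_trans _ (step1 R) x y -> cong R x y.
Proof. induction 1. apply step1_cong; auto. apply cong_refl. eapply cong_trans; eauto. Qed.

Lemma pos_app (a b : word S) : pos (a ++ b) = pos a ++ pos b.
Proof. unfold pos; apply map_app. Qed.
Lemma inv_app (a b : word S) : inv (a ++ b) = inv b ++ inv a.
Proof. unfold inv. rewrite map_app, rev_app_distr; auto. Qed.
Lemma inv_cons s (a : word S) : inv (s :: a) = inv a ++ [inr s].
Proof. reflexivity. Qed.
Lemma inv_snoc s (a : word S) : inv (a ++ [s]) = inr s :: inv a.
Proof. rewrite inv_app. reflexivity. Qed.
Lemma inv_nil : inv (@nil S) = []. Proof. reflexivity. Qed.
Lemma pos_nil : pos (@nil S) = []. Proof. reflexivity. Qed.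

Lemma rev_step_ctx R a b w w' : rev_step R w w' -> rev_step R (a ++ w ++ b) (a ++ w' ++ b).
Proof.
  intros H; destruct H.
  - replace (a ++ (a0 ++ inv u ++ pos u ++ b0) ++ b) with ((a ++ a0) ++ inv u ++ pos u ++ (b0 ++ b))
      by (rewrite !app_assoc; auto).
    replace (a ++ (a0 ++ b0) ++ b) with ((a ++ a0) ++ (b0 ++ b)) by (rewrite !app_assoc; auto).
    constructor; auto.
  - replace (a ++ (a0 ++ inv u ++ pos v ++ b0) ++ b) with ((a ++ a0) ++ inv u ++ pos v ++ (b0 ++ b))
      by (rewrite !app_assoc; auto).
    replace (a ++ (a0 ++ pos v' ++ inv u' ++ b0) ++ b) with ((a ++ a0) ++ pos v' ++ inv u' ++ (b0 ++ b))
      by (rewrite !app_assoc; auto).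
    constructor; auto.
Qed.

Lemma rev_ctx R a b w w' : reverses R w w' -> reverses R (a ++ w ++ b) (a ++ w' ++ b).
Proof. induction 1. apply rt_step, rev_step_ctx; auto. apply rt_refl. eapply rt_trans; eauto. Qed.

Lemma rev_trans R w1 w2 w3 : reverses R w1 w2 -> reverses R w2 w3 -> reverses R w1 w3.
Proof. apply rt_trans. Qed.

End Basics.

Section DSec.
Variable S : Type.
Variable R : rels S.
Implicit Types x y u v : word S.

Inductive D : word S -> word S -> word S -> word S -> Prop :=
| D_nil_l : forall v, D [] v v []
| D_nil_r : forall u, D u [] [] u
| D_del : forall s, D [s] [s] [] []
| D_rel : forall s t x y, urel R (s::x) (t::y) -> D [s] [t] x y
| D_h : forall u v1 v2 v1' v2' u1 u2, D u v1 v1' u1 -> D u1 v2 v2' u2 ->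
    D u (v1++v2) (v1'++v2') u2
| D_v : forall u1 u2 v v1 v2 u1' u2', D u1 v v1 u1' -> D u2 v1 v2 u2' ->
    D (u1++u2) v v2 (u1'++u2').

Lemma D_sound u v v' u' : D u v v' u' -> reverses R (inv u ++ pos v) (pos v' ++ inv u').
Proof.
  induction 1.
  - rewrite inv_nil, app_nil_r. apply rt_refl.
  - rewrite pos_nil, app_nil_r. apply rt_refl.
  - apply rt_step. pose proof (@rs_del S R [] [] [s]) as H. simpl in H. apply H. discriminate.
  - apply rt_step. pose proof (@rs_rel S R [] [] [s] [t] y x) as Hs. simpl in Hs. rewrite !app_nil_r in Hs.
    apply Hs; auto; discriminate.
  - rewrite pos_app. apply rev_trans with (pos v1' ++ inv u1 ++ pos v2).
    + pose proof (rev_ctx [] (pos v2) IHD1) as H1. simpl in H1. rewrite <- !app_assoc in H1. exact H1.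
    + pose proof (rev_ctx (pos v1') [] IHD2) as H2. rewrite !app_nil_r in H2. rewrite pos_app, <- app_assoc. exact H2.
  - rewrite !inv_app. apply rev_trans with (inv u2 ++ pos v1 ++ inv u1').
    + pose proof (rev_ctx (inv u2) [] IHD1) as H1. rewrite !app_nil_r in H1. rewrite <- app_assoc. exact H1.
    + pose proof (rev_ctx [] (inv u1') IHD2) as H2. simpl in H2. rewrite <- !app_assoc in H2. exact H2.
Qed.

Lemma D_sem u v v' u' : D u v v' u' -> cong R (u ++ v') (v ++ u').
Proof.
  induction 1; simpl; rewrite ?app_nil_r; try apply cong_refl.
  - apply cong_urel; auto.
  - apply cong_trans with (v1 ++ u1 ++ v2').
    + rewrite (app_assoc u), (app_assoc v1). apply cong_appr. auto.
    + rewrite <- (app_assoc v1). apply cong_appl. auto.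
  - apply cong_trans with (u1 ++ v1 ++ u2').
    + rewrite <- (app_assoc u1). apply cong_appl. auto.
    + rewrite (app_assoc u1), (app_assoc v). apply cong_appr. auto.
Qed.

Lemma D_split_u u v v' u' : D u v v' u' -> forall a b, u = a ++ b ->
  exists v1 u1 u2, D a v v1 u1 /\ D b v1 v' u2 /\ u' = u1 ++ u2.
Proof.
  induction 1; intros a b Hab.
  - symmetry in Hab; apply app_eq_nil in Hab as [-> ->]. exists v, [], []. split. constructor. split. constructor. auto.
  - subst. exists [], a, b. split. constructor. split. constructor. auto.
  - destruct a as [|a0 a]; simpl in Hab.
    + subst. exists [s], [], []. split. constructor. split. constructor. auto.
    + inversion Hab; subst. symmetry in H1; apply app_eq_nil in H1 as [-> ->].
      exists [], [], []. split. constructor. split. constructor. auto.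
  - destruct a as [|a0 a]; simpl in Hab.
    + subst. exists [t], [], y. split. constructor. split. constructor; auto. auto.
    + inversion Hab; subst. symmetry in H2; apply app_eq_nil in H2 as [-> ->].
      exists x, y, []. split. constructor; auto. split. constructor. rewrite app_nil_r; auto.
  - destruct (IHD1 a b Hab) as (p&q&q'&Ha&Hb&->).
    destruct (IHD2 q q' eq_refl) as (m&n&n'&Hq&Hq'&->).
    exists (p ++ m), n, n'. split. eapply D_h; eauto. split. eapply D_h; eauto. auto.
  - apply app_eq_app in Hab as [l [[Hl1 Hl2]|[Hl1 Hl2]]].
    + destruct (IHD1 a l Hl1) as (p&q&q'&Ha&Hl&->).
      exists p, q, (q' ++ u2'). split; auto. split. subst b. eapply D_v; eauto. rewrite app_assoc; auto.
    + destruct (IHD2 l b Hl2) as (p&q&q'&Hl&Hb&->).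
      exists p, (u1' ++ q), q'. split. subst a. eapply D_v; eauto. split; auto. rewrite app_assoc; auto.
Qed.

Lemma D_split_v u v v' u' : D u v v' u' -> forall a b, v = a ++ b ->
  exists u1 v1 v2, D u a v1 u1 /\ D u1 b v2 u' /\ v' = v1 ++ v2.
Proof.
  induction 1; intros a b Hab.
  - subst. exists [], a, b. split. constructor. split. constructor. auto.
  - symmetry in Hab; apply app_eq_nil in Hab as [-> ->]. exists u, [], []. split. constructor. split. constructor. auto.
  - destruct a as [|a0 a]; simpl in Hab.
    + subst. exists [s], [], []. split. constructor. split. constructor. auto.
    + inversion Hab; subst. symmetry in H1; apply app_eq_nil in H1 as [-> ->].
      exists [], [], []. split. constructor. split. constructor. auto.
  - destruct a as [|a0 a]; simpl in Hab.
    + subst. exists [s], [], x. split. constructor. split. constructor; auto. auto.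
    + inversion Hab; subst. symmetry in H2; apply app_eq_nil in H2 as [-> ->].
      exists y, x, []. split. constructor; auto. split. constructor. rewrite app_nil_r; auto.
  - apply app_eq_app in Hab as [l [[Hl1 Hl2]|[Hl1 Hl2]]].
    + destruct (IHD1 a l Hl1) as (p&q&q'&Ha&Hl&->).
      exists p, q, (q' ++ v2'). split; auto. split. subst b. eapply D_h; eauto. rewrite app_assoc; auto.
    + destruct (IHD2 l b Hl2) as (p&q&q'&Hl&Hb&->).
      exists p, (v1' ++ q), q'. split. subst a. eapply D_h; eauto. split; auto. rewrite app_assoc; auto.
  - destruct (IHD1 a b Hab) as (p&q&q'&Ha&Hb&->).
    destruct (IHD2 q q' eq_refl) as (m&n&n'&Hq&Hq'&->).
    exists (p ++ m), n, n'. split. eapply D_v; eauto. split. eapply D_v; eauto. auto.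
Qed.

Lemma D_refl u : D u u [] [].
Proof.
  induction u as [|s u IH]. constructor.
  pose proof (D_h (D_del s) (D_nil_l u)) as H. simpl in H.
  pose proof (D_v H IH) as H2. simpl in H2. exact H2.
Qed.

Lemma D_pref p q : D (p ++ q) p [] q.
Proof. pose proof (D_v (D_refl p) (D_nil_r q)) as H. exact H. Qed.

Lemma D_pref2 p q : D p (p ++ q) q [].
Proof. pose proof (D_h (D_refl p) (D_nil_l q)) as H. exact H. Qed.

Lemma D_of_rel x y x' y' : x <> [] -> y <> [] -> urel R (x ++ y') (y ++ x') -> D x y y' x'.
Proof.
  intros Hx Hy Hr. destruct x as [|s x0]; [congruence|]. destruct y as [|t y0]; [congruence|].
  assert (H1 : D [s] [t] (x0 ++ y') (y0 ++ x')) by (constructor; auto).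
  pose proof (D_h H1 (D_pref y0 x')) as H2. rewrite app_nil_r in H2.
  pose proof (D_v H2 (D_pref2 x0 y')) as H3. rewrite app_nil_r in H3. exact H3.
Qed.

Lemma D_nil_inv v v' u' : D [] v v' u' -> v' = v /\ u' = [].
Proof.
  intros H. remember (@nil S) as e eqn:He. revert He. induction H; intros He; try discriminate; auto.
  - subst. destruct (IHD1 eq_refl) as [-> ->]. destruct (IHD2 eq_refl) as [-> ->]. auto.
  - apply app_eq_nil in He as [-> ->].
    destruct (IHD1 eq_refl) as [-> ->]. destruct (IHD2 eq_refl) as [-> ->]. auto.
Qed.

(* F : reversing semantics for arbitrary signed words *)
Inductive F : sword S -> word S -> word S -> Prop :=
| F_nil : F [] [] []
| F_pos : forall s w v u, F w v u -> F (inl s :: w) (s :: v) u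
| F_neg : forall s w v u v' u', F w v u -> D [s] v v' u' -> F (inr s :: w) v' (u ++ u').

Lemma F_posw z : F (pos z) z [].
Proof. induction z; simpl; constructor; auto. Qed.

Lemma F_pos_inv z v u : F (pos z) v u -> v = z /\ u = [].
Proof.
  revert v u; induction z; intros v u H; simpl in H; inversion H; subst; auto.
  destruct (IHz _ _ H4); subst; auto.
Qed.

Lemma F_app a c v u : F (a ++ c) v u <-> exists v1 u1 u2, F c v1 u1 /\ F (a ++ pos v1) v u2 /\ u = u1 ++ u2.
Proof.
  revert v u; induction a as [|[s|s] a IH]; intros v u; simpl; split.
  - intros H. exists v, u, []. split; auto. split. apply F_posw. rewrite app_nil_r; auto.
  - intros (v1&u1&u2&H1&H2&->). apply F_pos_inv in H2 as [-> ->]. rewrite app_nil_r; auto.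
  - intros H; inversion H; subst. apply IH in H4 as (v1&u1&u2&H1&H2&->).
    exists v1, u1, u2. split; auto. split; auto. constructor; auto.
  - intros (v1&u1&u2&H1&H2&->). inversion H2; subst. constructor. apply IH. eauto 6.
  - intros H; inversion H; subst. apply IH in H2 as (v1&u1&u2&H1&H2&->).
    exists v1, u1, (u2 ++ u'). split; auto. split. econstructor; eauto. rewrite app_assoc; auto.
  - intros (v1&u1&u2&H1&H2&->). inversion H2; subst. rewrite app_assoc. econstructor; eauto.
    apply IH. eauto 6.
Qed.

Lemma F_to_D x z v u : F (inv x ++ pos z) v u -> D x z v u.
Proof.
  revert v u; induction x as [|s x IH] using rev_ind; intros v u H.
  - simpl in H. apply F_pos_inv in H as [-> ->]. constructor.
  - rewrite inv_snoc in H. simpl in H. inversion H; subst. eapply D_v; eauto.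
Qed.

Lemma D_to_F x z v u : D x z v u -> F (inv x ++ pos z) v u.
Proof.
  revert z v u; induction x as [|s x IH] using rev_ind; intros z v u H.
  - apply D_nil_inv in H as [-> ->]. apply F_posw.
  - destruct (D_split_u H x [s] eq_refl) as (v1&u1&u2&H1&H2&->).
    rewrite inv_snoc. simpl. econstructor; eauto.
Qed.

Lemma F_inv u : F (inv u) [] u.
Proof.
  induction u as [|s u IH] using rev_ind. constructor.
  rewrite inv_snoc. econstructor; eauto. constructor.
Qed.

Lemma F_end v u : F (pos v ++ inv u) v u.
Proof.
  apply F_app. exists [], u, []. split. apply F_inv. split. rewrite app_nil_r. apply F_posw.
  rewrite app_nil_r; auto.
Qed.

Lemma F_pos_app x b v u : F b v u -> F (pos x ++ b) (x ++ v) u.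
Proof. induction x; simpl; auto. intros; constructor; auto. Qed.

Lemma F_pos_app_inv x b v u : F (pos x ++ b) v u -> exists v3, v = x ++ v3 /\ F b v3 u.
Proof.
  revert v; induction x; simpl; intros v H. eauto.
  inversion H; subst. destruct (IHx _ H4) as (v3&->&H'). eauto.
Qed.

Lemma F_step w w1 v u : rev_step R w w1 -> F w1 v u -> F w v u.
Proof.
  intros Hs; destruct Hs as [a b x Hx|a b x y x' y' Hx Hy Hr]; intros H.
  - apply F_app in H as (v1&u1&u2&H1&H2&->). apply F_app. exists v1, u1, u2. split; auto.
    apply F_app. exists (x ++ v1), u1, []. split. apply F_pos_app; auto. split.
    apply D_to_F. apply D_pref2. rewrite app_nil_r; auto.
  - apply D_of_rel in Hr; auto.
    apply F_app in H as (v1&u1&u2&H1&H2&->).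
    apply F_pos_app_inv in H1 as (v3&->&H1).
    apply F_app in H1 as (v4&u4&u5&H4&H5&->).
    apply F_to_D in H5.
    pose proof (D_h Hr H5) as H6. apply D_to_F in H6.
    apply F_app. exists (y' ++ v3), (u4 ++ u5), u2. split; auto.
    rewrite app_assoc. apply F_app. exists v4, u4, u5. split; auto. split; auto. rewrite <- app_assoc, <- pos_app. auto.
    
Qed.

Lemma F_rev w w' v u : reverses R w w' -> F w' v u -> F w v u.
Proof. induction 1; intros; eauto using F_step. Qed.

Lemma rev_complete x z v u : reverses R (inv x ++ pos z) (pos v ++ inv u) -> D x z v u.
Proof. intros H. apply F_to_D. eapply F_rev; eauto. apply F_end. Qed.

Lemma rev_to_nil x z : reverses R (inv x ++ pos z) [] -> D x z [] [].
Proof. intros H. apply rev_complete. exact H. Qed.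

Lemma completion_cong s r t v u :
  reverses R (inv [s] ++ pos [r] ++ inv [r] ++ pos [t]) (pos v ++ inv u) ->
  cong R (s :: v) (t :: u).
Proof.
  intros H. eapply F_rev in H; [|apply F_end]. simpl in H.
  inversion H as [| |s0 w0 v0 u0 v0' u0' Hw Hd]; subst; clear H.
  inversion Hw as [|s1 w1 v1 u1 Hw1|]; subst; clear Hw.
  inversion Hw1 as [| |s2 w2 v2 u2 v2' u2' Hw2 Hd2]; subst; clear Hw1.
  inversion Hw2 as [|s3 w3 v3 u3 Hw3|]; subst; clear Hw2.
  inversion Hw3; subst; clear Hw3.
  apply D_sem in Hd. apply D_sem in Hd2. simpl in Hd, Hd2 |- *.
  eapply cong_trans. apply Hd.
  change (r :: v1 ++ u0') with ([r] ++ v1 ++ u0'). rewrite app_assoc.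
  change (t :: u2' ++ u0') with ([t] ++ u2' ++ u0'). rewrite (app_assoc [t]).
  apply cong_appr. exact Hd2.
Qed.

End DSec.

Section Main.
Variable S : Type.
Variable R : rels S.
Variable W : Type.
Variable ltW : W -> W -> Prop.
Variable lam : word S -> W.
Hypothesis Wwf : well_founded ltW.
Hypothesis Wtrans : forall a b c, ltW a b -> ltW b c -> ltW a c.
Hypothesis lam_inv : forall u v, cong R u v -> lam u = lam v.
Hypothesis lam_inc : forall s u, ltW (lam u) (lam (s::u)).
Hypothesis cube : forall s r t u v,
  reverses R (inv [s] ++ pos [r] ++ inv [r] ++ pos [t]) (pos v ++ inv u) ->
  reverses R (inv v ++ inv [s] ++ pos [t] ++ pos u) [].

Lemma irreflW a : ~ ltW a a.
Proof. induction (Wwf a) as [a _ IH]. intros H. exact (IH a H H). Qed.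

Lemma lam_nil u : u <> [] -> ltW (lam []) (lam u).
Proof.
  induction u as [|s u IH]; intros H. congruence.
  destruct u as [|s' u']. apply lam_inc. eapply Wtrans; [apply IH; discriminate|apply lam_inc].
Qed.

Lemma cong_nil_l u : cong R [] u -> u = [].
Proof.
  intros H. destruct u as [|s u]; auto. exfalso. apply lam_inv in H.
  pose proof (lam_nil (u := s :: u) ltac:(discriminate)) as H2. rewrite H in H2. exact (irreflW H2).
Qed.

Lemma combine s r t x y v1 u1 w1 v2 u2 w2 v3 u3 w3 :
  D R [s] [r] v1 u1 -> cong R x (v1 ++ w1) ->
  D R [r] [t] v2 u2 -> cong R y (u2 ++ w2) ->
  D R u1 v2 v3 u3 -> cong R w1 (v3 ++ w3) -> cong R w2 (u3 ++ w3) ->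
  exists v'' u'' w, D R [s] [t] v'' u'' /\ cong R y (u'' ++ w) /\ cong R x (v'' ++ w).
Proof.
  intros H1 Hx H2 Hy H3 Hw1 Hw2.
  assert (Hrev : reverses R (inv [s] ++ pos [r] ++ inv [r] ++ pos [t]) (pos (v1 ++ v3) ++ inv (u2 ++ u3))).
  { apply D_sound in H1, H2, H3.
    apply rev_trans with ((pos v1 ++ inv u1) ++ inv [r] ++ pos [t]).
    { pose proof (rev_ctx [] (inv [r] ++ pos [t]) H1) as E. simpl in E |- *. exact E. }
    apply rev_trans with ((pos v1 ++ inv u1) ++ (pos v2 ++ inv u2) ++ []).
    { pose proof (rev_ctx (pos v1 ++ inv u1) [] H2) as E. exact E. }
    rewrite app_nil_r.
    pose proof (rev_ctx (pos v1) (inv u2) H3) as E.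
    rewrite pos_app, inv_app. rewrite <- !app_assoc in E |- *. exact E. }
  apply cube in Hrev.
  assert (Hd : D R (s :: v1 ++ v3) (t :: u2 ++ u3) [] []).
  { apply rev_to_nil. rewrite inv_cons. simpl. rewrite <- app_assoc. simpl in Hrev. exact Hrev. }
  destruct (D_split_u Hd [s] (v1 ++ v3) eq_refl) as (p&q&q'&Hs&HV&Hq).
  symmetry in Hq; apply app_eq_nil in Hq as [-> ->].
  destruct (D_split_v Hs [t] (u2 ++ u3) eq_refl) as (q1&p1&p2&Hst&HU&->).
  destruct (D_split_v HV p1 p2 eq_refl) as (c&m1&m2&HV1&HV2&Hm).
  symmetry in Hm; apply app_eq_nil in Hm as [-> ->].
  apply D_sem in HV1, HV2, HU. rewrite !app_nil_r in HV1. rewrite !app_nil_r in HV2. rewrite !app_nil_r in HU.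
  exists p1, q1, (p2 ++ w3). split; auto. split.
  - eapply cong_trans. apply Hy. eapply cong_trans. apply cong_appl, Hw2.
    rewrite !app_assoc. apply cong_appr. apply cong_sym. exact HU.
  - eapply cong_trans. apply Hx. eapply cong_trans. apply cong_appl, Hw1.
    rewrite app_assoc. eapply cong_trans. apply cong_appr. exact HV1.
    rewrite <- app_assoc. apply cong_appl. apply cong_appr. exact HV2.
Qed.

Definition Pw L := forall u v u' v', lam (u ++ v') = L -> cong R (u ++ v') (v ++ u') ->
  exists v'' u'' w, D R u v v'' u'' /\ cong R u' (u'' ++ w) /\ cong R v' (v'' ++ w).

Lemma core L (IH : forall L', ltW L' L -> Pw L') s t x y :
  lam (s :: x) = L -> cong R (s :: x) (t :: y) ->
  exists v'' u'' w, D R [s] [t] v'' u'' /\ cong R y (u'' ++ w) /\ cong R x (v'' ++ w).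
Proof.
  intros HL Hc. apply cong_chain in Hc. apply clos_rt_rtn1 in Hc.
  remember (t :: y) as z eqn:Hz. revert t y Hz.
  induction Hc as [|z z' Hst Hc IHc]; intros t y Hz.
  - inversion Hz; subst. exists [], [], y. split. apply D_del. split; apply cong_refl.
  - assert (Hcz : cong R (s :: x) z) by (apply chain_cong, clos_rtn1_rt; exact Hc).
    destruct z as [|r x'].
    { apply cong_sym, cong_nil_l in Hcz. discriminate. }
    destruct (IHc r x' eq_refl) as (v1&u1&w1&H1&Hx'&Hx).
    destruct Hst as (a&b&l&r0&Hu&Hz1&Hz2).
    destruct a as [|c a0].
    + simpl in Hz1, Hz2.
      destruct l as [|l0 l1]; destruct r0 as [|r1 r2].
      * simpl in Hz1, Hz2. rewrite <- Hz1 in Hz2. rewrite Hz2 in Hz. inversion Hz; subst.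
        exists v1, u1, w1. auto.
      * exfalso. apply cong_urel, cong_nil_l in Hu. discriminate.
      * exfalso. apply cong_urel, cong_sym, cong_nil_l in Hu. discriminate.
      * simpl in Hz1, Hz2. injection Hz1 as <- ->. rewrite Hz2 in Hz. simpl in Hz. injection Hz as <- <-.
        assert (Hcell : D R [r] [r1] l1 r2) by (constructor; auto).
        assert (HLt : ltW (lam (u1 ++ w1)) L).
        { rewrite <- (lam_inv Hx'). rewrite <- HL. rewrite (lam_inv Hcz). apply lam_inc. }
        destruct (IH _ HLt u1 l1 b w1 eq_refl) as (v3&u3&w3&H3&Hb&Hw1).
        { apply cong_sym. exact Hx'. }
        eapply combine; eauto. apply cong_refl.
    + simpl in Hz1, Hz2. injection Hz1 as <- ->. rewrite Hz2 in Hz. injection Hz as <- <-.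
      exists v1, u1, w1. split; auto. split; auto.
      eapply cong_trans; [|exact Hx']. apply cong_ctx. apply cong_sym, cong_urel. exact Hu.
Qed.

Lemma P_all L : Pw L.
Proof.
  induction L as [L IH] using (well_founded_ind Wwf).
  assert (Hn : forall n u v u' v', length u + length v = n -> lam (u ++ v') = L ->
     cong R (u ++ v') (v ++ u') ->
     exists v'' u'' w, D R u v v'' u'' /\ cong R u' (u'' ++ w) /\ cong R v' (v'' ++ w)).
  { intros n. induction n as [n IHn] using lt_wf_ind.
    intros u v u' v' Hlen HL Hc.
    destruct u as [|s u0].
    { exists v, [], u'. split. constructor. split. apply cong_refl. exact Hc. }
    destruct v as [|t v0].
    { exists [], (s :: u0), v'. split. constructor. split. apply cong_sym. exact Hc. apply cong_refl. }
    destruct u0 as [|s0 u1].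
    - destruct v0 as [|t0 v1].
      +
        simpl in Hc. destruct (core IH HL Hc) as (v''&u''&w&H1&H2&H3). exists v'', u'', w. auto.
      +
        destruct (IHn 2 ltac:(simpl in Hlen; lia) [s] [t] (t0 :: v1 ++ u') v' eq_refl HL) as (va&ua&wa&Ha&Hua&Hva).
        { simpl in Hc |- *. exact Hc. }
        assert (HLt : ltW (lam (ua ++ wa)) L).
        { rewrite <- (lam_inv Hua). rewrite <- HL. rewrite (lam_inv Hc). simpl. apply lam_inc. }
        destruct (IH _ HLt ua (t0 :: v1) u' wa eq_refl) as (vb&ub&wb&Hb&Hub&Hvb).
        { apply cong_sym. exact Hua. }
        exists (va ++ vb), ub, wb. split.
        { change (t :: t0 :: v1) with ([t] ++ t0 :: v1). eapply D_h; eauto. }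
        split; auto. eapply cong_trans. exact Hva. rewrite <- app_assoc. apply cong_appl. exact Hvb.
    -
      destruct (IHn (1 + length (t :: v0)) ltac:(simpl in Hlen |- *; lia) [s] (t :: v0) u' (s0 :: u1 ++ v') eq_refl) as (va&ua&wa&Ha&Hua&Hva).
      { simpl in HL |- *. exact HL. }
      { simpl in Hc |- *. exact Hc. }
      assert (HLt : ltW (lam (s0 :: u1 ++ v')) L).
      { rewrite <- HL. apply lam_inc. }
      destruct (IH _ HLt (s0 :: u1) va wa v' eq_refl) as (vb&ub&wb&Hb&Hub&Hvb).
      { exact Hva. }
      exists vb, (ua ++ ub), wb. split.
      { change (s :: s0 :: u1) with ([s] ++ s0 :: u1). eapply D_v; eauto. }
      split; auto. eapply cong_trans. exact Hua. rewrite <- app_assoc. apply cong_appl. exact Hub. }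
  intros u v u' v' HL Hc. eapply Hn; eauto.
Qed.

Theorem main_complete : r_complete R.
Proof.
  intros u v u' v' Hc.
  destruct (P_all (L := lam (u ++ v')) u v u' v' eq_refl Hc) as (v''&u''&w&HD&H1&H2).
  exists u'', v'', w. split; auto. apply D_sound. exact HD.
Qed.

End Main.

Section WO.
Variable I : Type.
Variable lt : I -> I -> Prop.
Hypothesis Hwo : is_wellorder lt.

Lemma wo_irrefl a : ~ lt a a.
Proof. destruct Hwo as [Hwf _]. induction (Hwf a) as [a _ IH]. intros H. exact (IH a H H). Qed.

Lemma wo_trans a b c : lt a b -> lt b c -> lt a c.
Proof. destruct Hwo as [_ [Ht _]]. eauto. Qed.

Lemma wo_total a b : lt a b \/ a = b \/ lt b a.
Proof. destruct Hwo as [_ [_ Ht]]. auto. Qed.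

Lemma wo_min (P : I -> Prop) : (exists x, P x) -> exists m, P m /\ forall y, P y -> ~ lt y m.
Proof.
  intros [x Hx]. destruct Hwo as [Hwf _]. revert Hx. induction (Hwf x) as [x _ IH]. intros Hx.
  destruct (classic (exists y, P y /\ lt y x)) as [[y [Hy Hyx]]|Hn].
  - eauto.
  - exists x. split; auto. intros y Hy Hyx. apply Hn; eauto.
Qed.

Lemma wo_succ_ex i : (exists k, lt i k) -> exists m, is_succ lt i m.
Proof.
  intros H. destruct (wo_min (fun k => lt i k) H) as [m [Hm Hmin]].
  exists m. split; auto. intros k [H1 H2]. exact (Hmin k H1 H2).
Qed.

Lemma wo_succ_le i m k : is_succ lt i m -> lt i k -> m = k \/ lt m k.
Proof.
  intros [Him Hs] Hik. destruct (wo_total m k) as [H|[H|H]]; auto.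
  exfalso. apply (Hs k); auto.
Qed.

Lemma wo_classify i : (forall j, ~ lt j i) \/ (exists j, is_succ lt j i) \/ is_limit lt i.
Proof.
  destruct (classic (exists j, lt j i)) as [H|H].
  - destruct (classic (exists j, is_succ lt j i)) as [H2|H2]; auto. right; right. split; auto.
  - left. intros j Hj. apply H; eauto.
Qed.


End WO.
Arguments wo_irrefl {I lt}. Arguments wo_trans {I lt}. Arguments wo_total {I lt}. Arguments wo_min {I lt}. Arguments wo_succ_ex {I lt}. Arguments wo_succ_le {I lt}. Arguments wo_classify {I} lt i.

Section Seq.
Variable S : Type.
Variable R : rels S.
Variable I : Type.
Variable lt : I -> I -> Prop.
Variable Rs : I -> rels S.
Hypothesis Hseq : r_completing_seq R lt Rs.


Lemma urel_sym (X : rels S) x y : urel X x y -> urel X y x.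
Proof. intros [H|H]; [right|left]; auto. Qed.

Lemma one_comp_sub (R0 R1 : rels S) : one_completion R0 R1 -> forall x y, urel R0 x y -> urel R1 x y.
Proof.
  intros (s&t&r&u&v&Hsame&_&_) x y Hxy. apply Hsame. destruct Hxy; [left|right]; left; auto.
Qed.

Lemma one_comp_cong (R0 R1 : rels S) : one_completion R0 R1 -> forall x y, cong R1 x y <-> cong R0 x y.
Proof.
  intros Hc. pose proof (one_comp_sub Hc) as Hsub.
  destruct Hc as (s&t&r&u&v&Hsame&Hrev&_). apply completion_cong in Hrev.
  intros x y; split; apply cong_mono; intros a b Hab.
  - assert (Hu : urel R1 a b) by (left; auto). apply Hsame in Hu.
    destruct Hu as [[H|[-> ->]]|[H|[-> ->]]].
    + apply cong_base; auto.
    + exact Hrev.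
    + apply cong_sym, cong_base; auto.
    + apply cong_sym; exact Hrev.
  - apply cong_urel. apply Hsub. left; auto.
Qed.

Lemma seq_cong i x y : cong (Rs i) x y <-> cong R x y.
Proof.
  destruct Hseq as [Hwo [Hmin [Hsucc Hlim]]].
  destruct Hwo as [Hwf Hrest]. revert x y. induction (Hwf i) as [i _ IH]. intros x y.
  destruct (wo_classify lt i) as [H|[[j Hj]|H]].
  - apply cong_same. apply Hmin; auto.
  - rewrite (one_comp_cong (Hsucc _ _ Hj)). apply IH. apply Hj.
  - split.
    + apply cong_mono. intros a b Hab. assert (Hu : urel (Rs i) a b) by (left; auto).
      apply (Hlim i H) in Hu. destruct Hu as [j [Hj Hu]]. apply (proj1 (IH j Hj a b)). apply cong_urel; auto.
    + pose proof H as [[j Hj] _]. intros Hc. apply (proj2 (IH j Hj x y)) in Hc. revert Hc. apply cong_mono.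
      intros a b Hab. apply cong_urel. apply (Hlim i H).
      exists j. split; auto. left; auto.
Qed.

Lemma seq_mono j : forall i, lt i j -> forall x y, urel (Rs i) x y -> urel (Rs j) x y.
Proof.
  pose proof Hseq as [Hwo [Hmin [Hsucc Hlim]]].
  pose proof Hwo as [Hwf _]. induction (Hwf j) as [j _ IH]. intros i Hij x y Hxy.
  destruct (wo_classify lt j) as [H|[[k Hk]|H]].
  - exfalso. exact (H i Hij).
  - apply (one_comp_sub (Hsucc _ _ Hk)).
    destruct (wo_total Hwo i k) as [H|[H|H]].
    + apply (IH k (proj1 Hk) i H); auto.
    + subst; auto.
    + exfalso. apply (proj2 Hk i). auto.
  - apply (Hlim j H). exists i; auto.
Qed.

Lemma new_rel (R0 R1 : rels S) : one_completion R0 R1 -> exists p q, urel R1 p q /\ ~ urel R0 p q.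
Proof.
  intros (s&t&r&u&v&Hsame&_&Hn). exists (s :: v), (t :: u). split.
  - apply Hsame. left. right. auto.
  - intros Hu. apply Hn. assert (Hd : D R0 (s :: v) (t :: u) [] []).
    { apply D_of_rel; try discriminate. rewrite !app_nil_r; auto. }
    apply D_sound in Hd. simpl in Hd. rewrite inv_cons, <- app_assoc in Hd. exact Hd.
Qed.

Definition gspec i (o : option (word S * word S)) :=
  (o = None /\ forall k, ~ lt i k) \/
  (exists m p q, o = Some (p, q) /\ is_succ lt i m /\ urel (Rs m) p q /\ ~ urel (Rs i) p q).

Lemma gspec_ex i : exists o, gspec i o.
Proof.
  pose proof Hseq as [Hwo [Hmin [Hsucc Hlim]]].
  destruct (classic (exists k, lt i k)) as [H|H].
  - destruct (wo_succ_ex Hwo i H) as [m Hm]. destruct (new_rel (Hsucc _ _ Hm)) as (p&q&H1&H2).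
    exists (Some (p, q)). right. exists m, p, q. auto.
  - exists None. left. split; auto. intros k Hk; apply H; eauto.
Qed.

Lemma gspec_lt i i' o o' : lt i i' -> gspec i o -> gspec i' o' -> o <> o'.
Proof.
  pose proof Hseq as [Hwo _].
  intros Hii' [[-> Hmax]|(m&p&q&->&Hm&H1&H2)]. { exfalso; exact (Hmax _ Hii'). }
  assert (Hu : urel (Rs i') p q).
  { destruct (wo_succ_le Hwo _ _ _ Hm Hii') as [<-|H]; auto. eapply seq_mono; eauto. }
  intros [[-> _]|(m'&p'&q'&->&_&_&H2')] Heq; try discriminate.
  injection Heq as <- <-. auto.
Qed.

Lemma seq_inj : exists g : I -> option (word S * word S), forall a b, g a = g b -> a = b.
Proof.
  pose proof Hseq as [Hwo _].
  exists (fun i => proj1_sig (constructive_indefinite_description _ (gspec_ex i))).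
  intros a b Hab.
  destruct (constructive_indefinite_description _ (gspec_ex a)) as [oa Ha].
  destruct (constructive_indefinite_description _ (gspec_ex b)) as [ob Hb]. simpl in Hab.
  destruct (wo_total Hwo a b) as [H|[H|H]]; auto.
  - exfalso. exact (gspec_lt H Ha Hb Hab).
  - exfalso. exact (gspec_lt H Hb Ha (eq_sym Hab)).
Qed.

End Seq.

Section Ext.
Variable S : Type.
Variable R : rels S.
Variable I : Type.
Variable lt : I -> I -> Prop.
Variable Rs : I -> rels S.
Hypothesis Hseq : r_completing_seq R lt Rs.

Definition ltJ (a b : option I) : Prop :=
  match a, b with Some x, Some y => lt x y | Some _, None => True | None, _ => False end.
Definition RsJ (Rtop : rels S) (a : option I) : rels S :=
  match a with Some x => Rs x | None => Rtop end.

Lemma ext_ok (Rtop : rels S) :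
  ((forall a : I, False) -> same_rels Rtop R) ->
  (forall a, (forall b, ~ lt a b) -> one_completion (Rs a) Rtop) ->
  ((exists a : I, True) -> (forall a, exists b, lt a b) ->
     forall x y, urel Rtop x y <-> exists a, urel (Rs a) x y) ->
  extendable R lt Rs.
Proof.
  intros H1 H2 H3. pose proof Hseq as [Hwo [Hmin [Hsucc Hlim]]].
  pose proof Hwo as [Hwf _].
  assert (Hacc : forall a, Acc ltJ (Some a)).
  { intros a. induction (Hwf a) as [a _ IH]. constructor. intros [b|] Hb; simpl in Hb; [apply IH; auto|simpl in *; contradiction]. }
  exists (option I), ltJ, (RsJ Rtop), Some. split; [|split; [|split; [|split]]].
  - split; [|split; [|split]].
    + split; [|split].
      * intros [a|]; auto. constructor. intros [b|] Hb; simpl in Hb; [apply Hacc|simpl in *; contradiction].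
      * intros [a|] [b|] [c|]; simpl; intros; try contradiction; auto. eapply wo_trans; eauto.
      * intros [a|] [b|]; simpl; auto. destruct (wo_total Hwo a b) as [H|[H|H]]; subst; auto.
    + intros [a|] H; simpl.
      * apply Hmin. intros j Hj. apply (H (Some j)). exact Hj.
      * apply H1. intros a. apply (H (Some a)). exact Logic.I.
    + intros [a|] [b|] Hs; simpl.
      * apply Hsucc. split; [apply Hs|]. intros k [Hk1 Hk2]. apply (proj2 Hs (Some k)). simpl; auto.
      * apply H2. intros b Hab. apply (proj2 Hs (Some b)). simpl; auto.
      * destruct Hs as [H _]; contradiction.
      * destruct Hs as [H _]; contradiction.
    + intros [b|] Hl x y; simpl.
      * assert (Hlb : is_limit lt b).
        { split.
          - destruct (proj1 Hl) as [[c|] Hc]; [exists c; auto|simpl in *; contradiction].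
          - intros [c Hc]. apply (proj2 Hl). exists (Some c). split; [apply Hc|].
            intros [k|] [Hk1 Hk2]; simpl in *; [apply (proj2 Hc k); auto|simpl in *; contradiction]. }
        rewrite (Hlim b Hlb). split.
        -- intros [j [Hj Hu]]. exists (Some j). auto.
        -- intros [[j|] [Hj Hu]]; [exists j; auto|simpl in *; contradiction].
      * assert (Hne : exists a : I, True).
        { destruct (proj1 Hl) as [[c|] Hc]; [exists c; auto|simpl in *; contradiction]. }
        assert (Hnm : forall a, exists b, lt a b).
        { intros a. apply NNPP. intros Hn. apply (proj2 Hl). exists (Some a). split; simpl; auto.
          intros [k|] [Hk1 Hk2]; simpl in *; [apply Hn; exists k; auto|simpl in *; contradiction]. }
        rewrite (H3 Hne Hnm). split.
        -- intros [a Ha]. exists (Some a). simpl; auto.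
        -- intros [[a|] [Ha Hu]]; [exists a; auto|simpl in *; contradiction].
  - intros a b; simpl; reflexivity.
  - intros [j|] a Hj; [exists j; auto|simpl in *; contradiction].
  - exists None. intros a; discriminate.
  - intros a x y; simpl; reflexivity.
Qed.

Lemma part3 (W : Type) (ltW : W -> W -> Prop) (lam : word S -> W) :
  is_wellorder ltW -> (forall u v, cong R u v -> lam u = lam v) ->
  (forall s u, ltW (lam u) (lam (s :: u))) ->
  ~ extendable R lt Rs ->
  exists i, (forall j, ~ lt i j) /\ r_complete (Rs i) /\
       (forall x y, cong (Rs i) x y <-> cong R x y).
Proof.
  intros HW Hlam Hinc Hne. pose proof Hseq as [Hwo _].
  destruct (classic (exists a, forall b, ~ lt a b)) as [[a Ha]|Hnomax].
  - destruct (classic (exists R', one_completion (Rs a) R')) as [[R' HR']|Hno].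
    + exfalso. apply Hne. apply (ext_ok (Rtop := R')).
      * intros H; destruct (H a).
      * intros a' Ha'. destruct (wo_total Hwo a a') as [H|[H|H]].
        -- destruct (Ha _ H).
        -- subst; auto.
        -- destruct (Ha' _ H).
      * intros _ Hm. destruct (Hm a) as [b Hb]. destruct (Ha b Hb).
    + exists a. split; auto. split.
      * destruct HW as [Hwf [Htr _]].
        apply (main_complete (ltW := ltW) lam Hwf Htr).
        -- intros u v Hc. apply Hlam. apply (proj1 (seq_cong Hseq a u v)). exact Hc.
        -- exact Hinc.
        -- intros s r t u v Hrev. apply NNPP. intros Hn. apply Hno.
           exists (fun x y => Rs a x y \/ (x = s :: v /\ y = t :: u)).
           exists s, t, r, u, v. split; [intros x y; reflexivity|]. split; auto.
      * intros x y; apply (seq_cong Hseq a).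
  - exfalso. apply Hne. destruct (classic (exists a : I, True)) as [[a0 _]|Hempty].
    + apply (ext_ok (Rtop := fun x y => exists a, urel (Rs a) x y)).
      * intros H; destruct (H a0).
      * intros a Ha; exfalso; apply Hnomax; eauto.
      * intros _ _ x y. split.
        -- intros [H|H]; auto. destruct H as [a Ha]. exists a. apply urel_sym; auto.
        -- intros H; left; auto.
    + apply (ext_ok (Rtop := R)).
      * intros _ x y; reflexivity.
      * intros a; exfalso; apply Hempty; eauto.
      * intros [a _]; exfalso; apply Hempty; eauto.
Qed.

End Ext.

Lemma zorn_w (T : Type) (P : (T -> Prop) -> Prop) :
  (forall F : (T -> Prop) -> Prop, (forall X, F X -> P X) ->
     (forall X Y, F X -> F Y -> (forall t, X t -> Y t) \/ (forall t, Y t -> X t)) ->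
     P (fun a => exists2 X, F X & X a)) ->
  exists A, P A /\ forall B, (forall t, A t -> B t) -> ~ (forall t, B t -> A t) -> ~ P B.
Proof.
  intros H. destruct (@classical_sets.Zorn_bigcup T P) as [A [HA Hmax]].
  - intros F HF Htot. apply H. exact HF. exact Htot.
  - exists A. split; auto. intros B H1 H2. apply Hmax. split; auto.
Qed.

Section Inf.
Variable S : Type.
Variable e : nat -> S.
Hypothesis e_inj : forall m n, e m = e n -> m = n.

Definition T1 := (S + (S * S * S))%type.
Definition Aof (X : T1 -> Prop) x := X (inl x).
Definition Gof (X : T1 -> Prop) x y z := X (inr (x, y, z)).

Definition good (X : T1 -> Prop) :=
  (forall x y z, Gof X x y z -> Aof X x /\ Aof X y /\ Aof X z) /\
  (forall x y, Aof X x -> Aof X y -> exists z, Gof X x y z) /\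
  (forall x y z z', Gof X x y z -> Gof X x y z' -> z = z') /\
  (forall x y x' y' z, Gof X x y z -> Gof X x' y' z -> x = x' /\ y = y').

Lemma good_ext X Y : (forall t, X t <-> Y t) -> good X -> good Y.
Proof.
  intros H [g1 [g2 [g3 g4]]]. unfold good, Aof, Gof in *.
  split; [|split; [|split]].
  - intros x y z Hg. apply H in Hg. destruct (g1 _ _ _ Hg) as (?&?&?). rewrite !H in *. auto.
  - intros x y Hx Hy. apply H in Hx, Hy. destruct (g2 _ _ Hx Hy) as [z Hz]. exists z. apply H; auto.
  - intros x y z z' H1 H2. apply H in H1, H2. eauto.
  - intros x y x' y' z H1 H2. apply H in H1, H2. eauto.
Qed.

Definition X0 (t : T1) : Prop :=
  match t with
  | inl x => exists n, x = e n
  | inr (x, y, z) => exists m n, x = e m /\ y = e n /\ z = e (Cantor.to_nat (m, n))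
  end.

Lemma good_X0 : good X0.
Proof.
  unfold good, Aof, Gof, X0. split; [|split; [|split]].
  - intros x y z (m&n&->&->&->). eauto 6.
  - intros x y [m ->] [n ->]. eauto 6.
  - intros x y z z' (m&n&->&->&->) (m'&n'&H1&H2&->). apply e_inj in H1, H2. subst; auto.
  - intros x y x' y' z (m&n&->&->&->) (m'&n'&->&->&H). apply e_inj, Cantor.to_nat_inj in H.
    injection H as -> ->. auto.
Qed.

Definition PZ (X : T1 -> Prop) := good (fun t => X0 t \/ X t).

Lemma PZ_chain : forall F : (T1 -> Prop) -> Prop, (forall X, F X -> PZ X) ->
     (forall X Y, F X -> F Y -> (forall t, X t -> Y t) \/ (forall t, Y t -> X t)) ->
     PZ (fun a => exists2 X, F X & X a).
Proof.
  intros F HF Htot.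
  set (U := fun t => X0 t \/ exists2 X, F X & X t).
  assert (two : forall t1 t2, U t1 -> U t2 -> exists Y, good Y /\ (forall t, Y t -> U t) /\ Y t1 /\ Y t2).
  { intros t1 t2 [H1|[X1 HX1 H1]] [H2|[X2 HX2 H2]].
    - exists X0. split. apply good_X0. split; auto. intros t Ht; left; auto.
    - exists (fun t => X0 t \/ X2 t). split. apply HF; auto. split; auto.
      intros t [Ht|Ht]; [left|right]; eauto.
    - exists (fun t => X0 t \/ X1 t). split. apply HF; auto. split; auto.
      intros t [Ht|Ht]; [left|right]; eauto.
    - destruct (Htot X1 X2 HX1 HX2) as [Hs|Hs].
      + exists (fun t => X0 t \/ X2 t). split. apply HF; auto. split; auto.
        intros t [Ht|Ht]; [left|right]; eauto.
      + exists (fun t => X0 t \/ X1 t). split. apply HF; auto. split; auto.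
        intros t [Ht|Ht]; [left|right]; eauto. }
  unfold PZ, good, Aof, Gof. fold U. split; [|split; [|split]].
  - intros x y z Hg. destruct (two _ _ Hg Hg) as (Y&[g1 _]&HYU&HY&_).
    destruct (g1 _ _ _ HY) as (?&?&?). repeat split; apply HYU; auto.
  - intros x y Hx Hy. destruct (two _ _ Hx Hy) as (Y&[_ [g2 _]]&HYU&HYx&HYy).
    destruct (g2 _ _ HYx HYy) as [z Hz]. exists z. apply HYU; auto.
  - intros x y z z' H1 H2. destruct (two _ _ H1 H2) as (Y&[_ [_ [g3 _]]]&HYU&HY1&HY2). eauto.
  - intros x y x' y' z H1 H2. destruct (two _ _ H1 H2) as (Y&[_ [_ [_ g4]]]&HYU&HY1&HY2). eauto.
Qed.

Section Max.
Variable A0 : T1 -> Prop.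
Hypothesis HA0 : PZ A0.
Hypothesis HA0max : forall B, (forall t, A0 t -> B t) -> ~ (forall t, B t -> A0 t) -> ~ PZ B.

Definition M t := X0 t \/ A0 t.
Definition AM := Aof M.
Definition GM := Gof M.

Lemma goodM : good M.
Proof. exact HA0. Qed.

Lemma maxM B : good B -> (forall t, M t -> B t) -> forall t, B t -> M t.
Proof.
  intros HB HMB t Bt. apply NNPP. intros Hn. apply (HA0max (B := B)).
  - intros t' Ht'. apply HMB. right; auto.
  - intros Hs. apply Hn. right. auto.
  - unfold PZ. eapply good_ext; [|exact HB]. intros t'. split; auto.
    intros [H|H]; auto. apply HMB. left; auto.
Qed.

Lemma AM_e k : AM (e k).
Proof. left. simpl. eauto. Qed.

Lemma g1M x y z : GM x y z -> AM x /\ AM y /\ AM z.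
Proof. apply goodM. Qed.
Lemma g2M x y : AM x -> AM y -> exists z, GM x y z.
Proof. apply goodM. Qed.
Lemma g3M x y z z' : GM x y z -> GM x y z' -> z = z'.
Proof. apply goodM. Qed.
Lemma g4M x y x' y' z : GM x y z -> GM x' y' z -> x = x' /\ y = y'.
Proof. apply goodM. Qed.

Section StepB.
Variable j : S -> S.
Hypothesis jout : forall a, AM a -> ~ AM (j a).
Hypothesis jinj : forall a b, AM a -> AM b -> j a = j b -> a = b.

Definition tagx k a := match k with 0 => a | _ => j a end.
Definition tagy k b := match k with 1 => b | _ => j b end.

Definition newG x y z := exists k a b c d, k <= 2 /\ AM a /\ AM b /\ x = tagx k a /\ y = tagy k b /\
  GM a b c /\ GM c (e k) d /\ z = j d.

Definition BB (t : T1) : Prop := M t \/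
  match t with inl x => exists a, AM a /\ x = j a | inr (x, y, z) => newG x y z end.

Lemma tagx_AM k a : AM a -> (AM (tagx k a) <-> k = 0).
Proof. intros Ha. destruct k; simpl; split; intros H; auto; try discriminate; exfalso; exact (jout Ha H). Qed.
Lemma tagy_AM k b : AM b -> (AM (tagy k b) <-> k = 1).
Proof.
  intros Hb. destruct k as [|[|k]]; simpl; split; intros H; auto; try discriminate;
  exfalso; exact (jout Hb H).
Qed.
Lemma tagx_inj k a a' : AM a -> AM a' -> tagx k a = tagx k a' -> a = a'.
Proof. destruct k; simpl; auto. Qed.
Lemma tagy_inj k b b' : AM b -> AM b' -> tagy k b = tagy k b' -> b = b'.
Proof. destruct k as [|[|k]]; simpl; auto. Qed.

Lemma good_BB : good BB.
Proof.
  unfold good, Aof, Gof, BB. fold newG. split; [|split; [|split]].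
  - intros x y z [Hg|Hn].
    + destruct (g1M Hg) as (?&?&?). unfold AM, Aof in *. auto.
    + destruct Hn as (k&a&b&c&d&Hk&Ha&Hb&->&->&Hab&Hcd&->).
      destruct (g1M Hcd) as (_&_&Hd). split; [|split].
      * destruct k; simpl; [left; exact Ha|right; eauto].
      * destruct k as [|[|k]]; simpl; [right; eauto|left; exact Hb|right; eauto].
      * right; eauto.
  - intros x y [Hx|(a&Ha&->)] [Hy|(b&Hb&->)].
    + destruct (g2M Hx Hy) as [z Hz]. exists z. left. exact Hz.
    + destruct (g2M Hx Hb) as [c Hc]. destruct (g2M (proj2 (proj2 (g1M Hc))) (AM_e 0)) as [d Hd].
      exists (j d). right. exists 0, x, b, c, d. repeat split; auto.
    + destruct (g2M Ha Hy) as [c Hc]. destruct (g2M (proj2 (proj2 (g1M Hc))) (AM_e 1)) as [d Hd].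
      exists (j d). right. exists 1, a, y, c, d. repeat split; auto.
    + destruct (g2M Ha Hb) as [c Hc]. destruct (g2M (proj2 (proj2 (g1M Hc))) (AM_e 2)) as [d Hd].
      exists (j d). right. exists 2, a, b, c, d. repeat split; auto.
  - intros x y z z' [H1|H1] [H2|H2].
    + eapply g3M; eauto.
    + exfalso. destruct (g1M H1) as (Hx&Hy&_).
      destruct H2 as (k&a&b&c&d&Hk&Ha&Hb&->&->&_).
      apply (tagx_AM k Ha) in Hx. apply (tagy_AM k Hb) in Hy. congruence.
    + exfalso. destruct (g1M H2) as (Hx&Hy&_).
      destruct H1 as (k&a&b&c&d&Hk&Ha&Hb&->&->&_).
      apply (tagx_AM k Ha) in Hx. apply (tagy_AM k Hb) in Hy. congruence.
    + destruct H1 as (k&a&b&c&d&Hk&Ha&Hb&Hx&Hy&Hab&Hcd&->).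
      destruct H2 as (k'&a'&b'&c'&d'&Hk'&Ha'&Hb'&Hx'&Hy'&Hab'&Hcd'&->).
      assert (Hxx : tagx k a = tagx k' a') by congruence.
      assert (Hyy : tagy k b = tagy k' b') by congruence.
      assert (k = k').
      { pose proof (tagx_AM k Ha) as E1. pose proof (tagx_AM k' Ha') as E2.
        pose proof (tagy_AM k Hb) as E3. pose proof (tagy_AM k' Hb') as E4.
        rewrite Hxx in E1. rewrite Hyy in E3.
        assert (F1 : k = 0 <-> k' = 0) by (rewrite <- E1, <- E2; tauto).
        assert (F2 : k = 1 <-> k' = 1) by (rewrite <- E3, <- E4; tauto).
        destruct k as [|[|[|k]]]; destruct k' as [|[|[|k']]]; try lia; firstorder. }
      subst k'. clear Hx' Hy'. rename Hxx into Hx'. rename Hyy into Hy'.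
      apply tagx_inj in Hx'; auto. apply tagy_inj in Hy'; auto. subst a' b'.
      assert (c = c') by (eapply g3M; eauto). subst c'.
      assert (d = d') by (eapply g3M; eauto). subst d'. auto.
  - intros x y x' y' z [H1|H1] [H2|H2].
    + eapply g4M; eauto.
    + exfalso. destruct (g1M H1) as (_&_&Hz).
      destruct H2 as (k&a&b&c&d&Hk&Ha&Hb&_&_&_&Hcd&->).
      eapply jout; [exact (proj2 (proj2 (g1M Hcd)))|exact Hz].
    + exfalso. destruct (g1M H2) as (_&_&Hz).
      destruct H1 as (k&a&b&c&d&Hk&Ha&Hb&_&_&_&Hcd&->).
      eapply jout; [exact (proj2 (proj2 (g1M Hcd)))|exact Hz].
    + destruct H1 as (k&a&b&c&d&Hk&Ha&Hb&->&->&Hab&Hcd&Hz).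
      destruct H2 as (k'&a'&b'&c'&d'&Hk'&Ha'&Hb'&->&->&Hab'&Hcd'&Hz').
      rewrite Hz in Hz'. apply jinj in Hz'; [|exact (proj2 (proj2 (g1M Hcd)))|exact (proj2 (proj2 (g1M Hcd')))].
      subst d'. destruct (g4M Hcd Hcd') as [-> He]. apply e_inj in He. subst k'.
      destruct (g4M Hab Hab') as [-> ->]. auto.
Qed.

Lemma stepB_false : False.
Proof.
  assert (H : BB (inl (j (e 0)))).
  { right. exists (e 0). split; auto. apply AM_e. }
  apply (maxM good_BB) in H.
  - eapply jout; [apply AM_e|exact H].
  - intros t Ht. left; auto.
Qed.

End StepB.

Lemma no_inj_out : ~ exists j : S -> S, (forall a, AM a -> ~ AM (j a)) /\
    (forall a b, AM a -> AM b -> j a = j b -> a = b).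
Proof. intros (j&H1&H2). exact (@stepB_false j H1 H2). Qed.

Definition QH (H : S * S -> Prop) :=
  (forall x y, H (x, y) -> ~ AM x /\ AM y) /\
  (forall x y y', H (x, y) -> H (x, y') -> y = y') /\
  (forall x x' y, H (x, y) -> H (x', y) -> x = x').

Lemma QH_chain : forall F : (S * S -> Prop) -> Prop, (forall X, F X -> QH X) ->
     (forall X Y, F X -> F Y -> (forall t, X t -> Y t) \/ (forall t, Y t -> X t)) ->
     QH (fun a => exists2 X, F X & X a).
Proof.
  intros F HF Htot.
  assert (two : forall t1 t2 X1 X2, F X1 -> F X2 -> X1 t1 -> X2 t2 -> exists Y, F Y /\ Y t1 /\ Y t2).
  { intros t1 t2 X1 X2 H1 H2 Ht1 Ht2. destruct (Htot X1 X2 H1 H2) as [Hs|Hs]; eauto. }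
  split; [|split].
  - intros x y [X HX Hxy]. apply (HF X HX); auto.
  - intros x y y' [X1 H1 Hy] [X2 H2 Hy']. destruct (two _ _ _ _ H1 H2 Hy Hy') as (Y&HY&Ha&Hb).
    exact (proj1 (proj2 (HF Y HY)) x y y' Ha Hb).
  - intros x x' y [X1 H1 Hy] [X2 H2 Hy']. destruct (two _ _ _ _ H1 H2 Hy Hy') as (Y&HY&Ha&Hb).
    exact (proj2 (proj2 (HF Y HY)) x x' y Ha Hb).
Qed.

Lemma inh : inhabited S.
Proof. exact (inhabits (e 0)). Qed.

Lemma compare_out : exists h : S -> S, (forall x, ~ AM x -> AM (h x)) /\
   (forall x y, ~ AM x -> ~ AM y -> h x = h y -> x = y).
Proof.
  destruct (@zorn_w _ _ QH_chain) as [H [[Hq1 [Hq2 Hq3]] Hmax]].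
  assert (Hall : forall x, ~ AM x -> exists y, H (x, y)).
  { intros x0 Hx0. apply NNPP. intros Hno.
    assert (Hy0 : exists y0, AM y0 /\ forall x, ~ H (x, y0)).
    { apply NNPP. intros Hn. apply no_inj_out.
      exists (fun y => epsilon inh (fun x => H (x, y))).
      assert (Hs : forall y, AM y -> H (epsilon inh (fun x => H (x, y)), y)).
      { intros y Hy. apply epsilon_spec. apply NNPP. intros Hn2. apply Hn. exists y. split; auto.
        intros x Hx. apply Hn2; eauto. }
      split.
      - intros a Ha. apply (Hq1 _ _ (Hs a Ha)).
      - intros a b Ha Hb Hab. apply (Hq2 (epsilon inh (fun x => H (x, a)))); auto.
        rewrite Hab. apply Hs; auto. }
    destruct Hy0 as [y0 [Hy0 Hy0n]].
    apply (Hmax (fun t => H t \/ t = (x0, y0))).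
    - intros t Ht; left; auto.
    - intros Hs. pose proof (Hs (x0, y0) (or_intror eq_refl)) as Hh. apply (Hy0n x0 Hh).
    - split; [|split].
      + intros x y [Hxy|Hxy]; [apply Hq1; auto|injection Hxy as -> ->; auto].
      + intros x y y' [H1|H1] [H2|H2].
        * eapply Hq2; eauto.
        * injection H2 as -> ->. exfalso; apply Hno; eauto.
        * injection H1 as -> ->. exfalso; apply Hno; eauto.
        * injection H1 as -> ->. injection H2 as ->. auto.
      + intros x x' y [H1|H1] [H2|H2].
        * eapply Hq3; eauto.
        * injection H2 as -> ->. exfalso; apply (Hy0n x); auto.
        * injection H1 as -> ->. exfalso; apply (Hy0n x'); auto.
        * injection H1 as -> ->. injection H2 as ->. auto. }
  exists (fun x => epsilon inh (fun y => H (x, y))).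
  assert (Hs : forall x, ~ AM x -> H (x, epsilon inh (fun y => H (x, y)))).
  { intros x Hx. apply epsilon_spec. apply Hall; auto. }
  split.
  - intros x Hx. apply (Hq1 _ _ (Hs x Hx)).
  - intros x y Hx Hy Hxy. apply (Hq3 x y (epsilon inh (fun y0 => H (x, y0)))); auto.
    rewrite Hxy. apply Hs; auto.
Qed.

Lemma pair_inj_M : exists pr : S -> S -> S, forall x y x' y', pr x y = pr x' y' -> x = x' /\ y = y'.
Proof.
  destruct compare_out as (h&Hh1&Hh2).
  set (gf := fun x y => epsilon inh (fun z => GM x y z)).
  assert (Hgf : forall x y, AM x -> AM y -> GM x y (gf x y)).
  { intros x y Hx Hy. apply epsilon_spec. apply g2M; auto. }
  set (p := fun x => if excluded_middle_informative (AM x) then gf x (e 0) else gf (h x) (e 1)).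
  assert (Hp : forall x, GM (if excluded_middle_informative (AM x) then x else h x)
                           (if excluded_middle_informative (AM x) then e 0 else e 1) (p x)).
  { intros x. unfold p. destruct (excluded_middle_informative (AM x)); apply Hgf; auto; apply AM_e. }
  assert (HpA : forall x, AM (p x)). { intros x. apply (g1M (Hp x)). }
  assert (Hpinj : forall x x', p x = p x' -> x = x').
  { intros x x' Hxx'. pose proof (Hp x) as H1. pose proof (Hp x') as H2. rewrite Hxx' in H1.
    destruct (g4M H1 H2) as [E1 E2].
    destruct (excluded_middle_informative (AM x)); destruct (excluded_middle_informative (AM x'));
      auto; apply e_inj in E2; try discriminate. }
  exists (fun x y => gf (p x) (p y)).
  intros x y x' y' H. pose proof (Hgf _ _ (HpA x) (HpA y)) as H1.
  pose proof (Hgf _ _ (HpA x') (HpA y')) as H2. rewrite H in H1.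
  destruct (g4M H1 H2) as [E1 E2]. auto.
Qed.

End Max.

Lemma pair_inj : exists pr : S -> S -> S, forall x y x' y', pr x y = pr x' y' -> x = x' /\ y = y'.
Proof.
  destruct (@zorn_w _ _ PZ_chain) as [A0 [HA0 Hmax]].
  exact (pair_inj_M HA0 Hmax).
Qed.

End Inf.

Section Card.
Variable S : Type.
Variable s0 : S.

Definition pick (l : list S) : S := epsilon (inhabits s0) (fun x => ~ In x l).
Fixpoint seqn (n : nat) : list S :=
  match n with 0 => [] | Datatypes.S n => seqn n ++ [pick (seqn n)] end.

Lemma seqn_in m n : m < n -> In (pick (seqn m)) (seqn n).
Proof.
  induction n; intros H. lia. simpl. apply in_or_app.
  destruct (Nat.eq_dec m n) as [->|Hne]. right; left; auto. left; apply IHn; lia.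
Qed.

Lemma dichotomy : (exists e : nat -> S, forall m n, e m = e n -> m = n) \/
                  (exists c : S -> nat, forall x y, c x = c y -> x = y).
Proof.
  destruct (classic (forall n, exists x, ~ In x (seqn n))) as [H|H].
  - left. exists (fun n => pick (seqn n)).
    assert (Hp : forall n, ~ In (pick (seqn n)) (seqn n)).
    { intros n. unfold pick. apply epsilon_spec. apply H. }
    intros m n Hmn. destruct (Nat.lt_total m n) as [Hl|[Hl|Hl]]; auto.
    + exfalso. apply (Hp n). rewrite <- Hmn. apply seqn_in; auto.
    + exfalso. apply (Hp m). rewrite Hmn. apply seqn_in; auto.
  - right. apply not_all_ex_not in H as [n Hn].
    assert (Hall : forall x, In x (seqn n)) by (intros x; apply NNPP; intros Hx; apply Hn; eauto).
    exists (fun x => epsilon (inhabits 0) (fun k => nth_error (seqn n) k = Some x)).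
    assert (Hs : forall x, nth_error (seqn n) (epsilon (inhabits 0) (fun k => nth_error (seqn n) k = Some x)) = Some x).
    { intros x. apply epsilon_spec. apply In_nth_error. apply Hall. }
    intros x y Hxy. pose proof (Hs x) as H1. rewrite Hxy, Hs in H1. injection H1; auto.
Qed.

Fixpoint encl (c : S -> nat) (l : list S) : nat :=
  match l with [] => 0 | x :: l => Datatypes.S (Cantor.to_nat (c x, encl c l)) end.

Lemma encl_inj c : (forall x y, c x = c y -> x = y) -> forall l l', encl c l = encl c l' -> l = l'.
Proof.
  intros Hc l; induction l as [|x l IH]; intros [|y l'] H; cbn [encl] in H; try discriminate; auto.
  apply Nat.succ_inj in H. apply Cantor.to_nat_inj in H. injection H as H1 H2.
  apply Hc in H1. apply IH in H2. subst; auto.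
Qed.

Fixpoint encv (pr : S -> S -> S) (z : S) (l : list S) : S :=
  match l with [] => z | x :: l => pr x (encv pr z l) end.

Lemma encv_inj pr z : (forall x y x' y', pr x y = pr x' y' -> x = x' /\ y = y') ->
  forall l l', length l = length l' -> encv pr z l = encv pr z l' -> l = l'.
Proof.
  intros Hp l; induction l as [|x l IH]; intros [|y l'] Hl H; simpl in *; try discriminate; auto.
  apply Hp in H as [-> H]. apply IH in H; [subst; auto|lia].
Qed.

Lemma card_opt : exists c : option (word S * word S) -> S + nat, forall a b, c a = c b -> a = b.
Proof.
  destruct dichotomy as [[e He]|[c Hc]].
  - destruct (@pair_inj _ e He) as [pr Hpr].
    set (enc := fun l : list S => pr (e (length l)) (encv pr (e 0) l)).
    assert (Henc : forall l l', enc l = enc l' -> l = l').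
    { intros l l' H. unfold enc in H. apply Hpr in H as [H1 H2]. apply He in H1.
      eapply encv_inj; eauto. }
    exists (fun o => match o with None => inr 0 | Some (v, u) => inl (pr (enc v) (enc u)) end).
    intros [[v u]|] [[v' u']|] H; try discriminate; auto.
    injection H as H. apply Hpr in H as [H1 H2]. apply Henc in H1, H2. subst; auto.
  - exists (fun o => match o with None => inr 0
        | Some (v, u) => inr (Datatypes.S (Cantor.to_nat (encl c v, encl c u))) end).
    intros [[v u]|] [[v' u']|] H; try discriminate; auto.
    assert (H' : Cantor.to_nat (encl c v, encl c u) = Cantor.to_nat (encl c v', encl c u')) by congruence. apply Cantor.to_nat_inj in H'. injection H' as H1 H2.
    apply encl_inj in H1, H2; auto. subst; auto.
Qed.

End Card.


Theorem proposition5p3 (S : Type) (R : rels S)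
  (hS : inhabited S) (hpos : positive R) (hhom : homogeneous R) :
  (* length < sup(kappa^+, aleph_1), i.e. |length| <= max(|S|, aleph_0) *)
  (forall (I : Type) (lt : I -> I -> Prop) (Rs : I -> rels S),
     r_completing_seq R lt Rs ->
     exists f : I -> S + nat, forall a b, f a = f b -> a = b) /\
  (* every presentation in the sequence defines the same congruence *)
  (forall (I : Type) (lt : I -> I -> Prop) (Rs : I -> rels S),
     r_completing_seq R lt Rs ->
     forall i x y, cong (Rs i) x y <-> cong R x y) /\
  (* non-extendable sequences end with an r-complete equivalent presentation *)
  (forall (I : Type) (lt : I -> I -> Prop) (Rs : I -> rels S),
     r_completing_seq R lt Rs -> ~ extendable R lt Rs ->
     exists i, (forall j, ~ lt i j) /\ r_complete (Rs i) /\
       (forall x y, cong (Rs i) x y <-> cong R x y)).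
Proof.
  destruct hS as [s0].
  destruct hhom as (W & ltW & lam & mu & HW & Hlam & Hmu & Hinc & Hmuinc).
  split; [|split].
  - intros I lt Rs Hseq. destruct (seq_inj Hseq) as [g Hg]. destruct (card_opt s0) as [c Hc].
    exists (fun i => c (g i)). auto.
  - intros I lt Rs Hseq i x y. apply (seq_cong Hseq).
  - intros I lt Rs Hseq Hne. exact (part3 Hseq lam HW Hlam Hinc Hne).
Qed.
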